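(* Let $H\subset\mathbb{R}$ be a non-trivial rank one subgroup. The semiring $\mathcal R_H$ of germs at $\lambda=1$ of $\mathbb{R}_{\max}$-valued, piecewise affine, continuous convex functions $f(\lambda)$ with slopes in $H$ (with operations pointwise max and pointwise $+$) is multiplicatively cancellative, and its semifield of fractions $\mathrm{Frac}\,\mathcal R_H$ is (isomorphic to) the semifield of germs at $\lambda=1$ of $\mathbb{R}_{\max}$-valued, piecewise affine, continuous functions $f(\lambda)$ with slopes in $H$, endowed with the operations of pointwise max and pointwise addition of germs.
   Context: $\mathbb{R}_{\max}=\mathbb{R}\cup\{-\infty\}$ with ''addition'' $\max$ and ''multiplication'' $+$. A rank one subgroup of $\mathbb{R}$ is one isomorphic to a non-zero subgroup of $\mathbb{Q}$. The germ of the constant function $-\infty$ is the zero element; multiplicatively cancellative means $f+h=g+h$ with $h\neq-\infty$ implies $f=g$. *)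

(* Defs.v *)
(* R : realType, R_max rendered as \bar R (values in R or -oo). *)
From HB Require Import structures.
From mathcomp Require Import all_boot all_order all_algebra.
From mathcomp Require Import boolp classical_sets reals ereal topology normedtype.
Set Implicit Arguments. Unset Strict Implicit. Unset Printing Implicit Defensive.
Import Order.TTheory GRing.Theory Num.Theory numFieldNormedType.Exports.
Local Open Scope ring_scope.
Local Open Scope classical_set_scope.

Section Defs.
Variable R : realType.

Definition rank_one_subgroup (H : set R) : Prop :=
  [/\ H 0,
      (forall x y, H x -> H y -> H (x - y)),
      (exists x, H x /\ x != 0) &
      exists phi : R -> rat,
        (forall x y, H x -> H y -> phi (x + y) = phi x + phi y) /\
        (forall x y, H x -> H y -> phi x = phi y -> x = y)].

Definition germ_eq (f g : R -> \bar R) : Prop :=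
  exists e : R, 0 < e /\ forall x, `|x - 1| < e -> f x = g x.

Definition gmax (f g : R -> \bar R) : R -> \bar R := fun x => Order.max (f x) (g x).
Definition gadd (f g : R -> \bar R) : R -> \bar R := fun x => (f x + g x)%E.
Definition gzero : R -> \bar R := fun _ => -oo%E.

Definition piece_val (o : option (R * R)) (x : R) : \bar R :=
  match o with None => -oo%E | Some (c, s) => (c + s * x)%:E end.

Definition piece_slope_in (H : set R) (o : option (R * R)) : Prop :=
  match o with None => True | Some (_, s) => H s end.

Definition pw_affine_on (H : set R) (e : R) (f : R -> \bar R) : Prop :=
  exists l : seq (R * R * option (R * R)),
    (forall p, p \in l -> piece_slope_in H p.2 /\
       forall x, `|x - 1| < e -> p.1.1 <= x <= p.1.2 -> f x = piece_val p.2 x) /\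
    (forall x, `|x - 1| < e -> exists2 p, p \in l & p.1.1 <= x <= p.1.2).

Definition continuous_on_nbhd1 (e : R) (f : R -> \bar R) : Prop :=
  forall x : R, `|x - 1| < e -> {for x, continuous f}.

Definition convex_on_nbhd1 (e : R) (f : R -> \bar R) : Prop :=
  forall x y t : R, `|x - 1| < e -> `|y - 1| < e -> 0 < t < 1 ->
    (f (t * x + (1 - t) * y)%R <= t%:E * f x + ((1 - t)%R)%:E * f y)%E.

Definition PL_germ (H : set R) (f : R -> \bar R) : Prop :=
  exists e : R, 0 < e /\ pw_affine_on H e f /\ continuous_on_nbhd1 e f.

Definition CPL_germ (H : set R) (f : R -> \bar R) : Prop :=
  exists e : R, 0 < e /\ pw_affine_on H e f /\ continuous_on_nbhd1 e f /\
    convex_on_nbhd1 e f.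

(* a formal fraction f/g (i.e. f - g in tropical notation) with f, g in R_H, g <> 0 *)
Definition frac_pair (H : set R) (f g : R -> \bar R) : Prop :=
  CPL_germ H f /\ CPL_germ H g /\ ~ germ_eq g gzero.

End Defs.

(* Main.v *)
Require Import Defs.
From HB Require Import structures.
From mathcomp Require Import all_boot all_order all_algebra.
From mathcomp Require Import boolp classical_sets reals ereal topology normedtype.
From mathcomp Require Import ring lra.
Set Implicit Arguments. Unset Strict Implicit. Unset Printing Implicit Defensive.
Import Order.TTheory GRing.Theory Num.Theory numFieldNormedType.Exports.

Section Helpers.
Local Open Scope ring_scope.
Local Open Scope classical_set_scope.
Variable R : realType.
Implicit Types (H : set R) (f g h : R -> \bar R).

Lemma endpoints_bound (l : seq (R * R * option (R * R))) (e : R) : 0 < e ->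
  exists d, [/\ 0 < d, d <= e & forall p, p \in l ->
    (p.1.1 != 1 -> d <= `|p.1.1 - 1|) /\ (p.1.2 != 1 -> d <= `|p.1.2 - 1|)].
Proof.
move=> e0; elim: l => [|q l [d [d0 de Hd]]].
  by exists e; split => // p; rewrite in_nil.
pose da := if q.1.1 == 1 then e else `|q.1.1 - 1|.
pose db := if q.1.2 == 1 then e else `|q.1.2 - 1|.
have da0 : 0 < da by rewrite /da; case: eqP => // /eqP; rewrite -subr_eq0 -normr_gt0.
have db0 : 0 < db by rewrite /db; case: eqP => // /eqP; rewrite -subr_eq0 -normr_gt0.
exists (Num.min d (Num.min da db)); split.
- by rewrite !lt_min d0 da0 db0.
- by rewrite ge_min de.
move=> p; rewrite in_cons => /orP [/eqP ->|pl].
  split=> /negPf H1; rewrite !ge_min ?orbT //.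
    by rewrite /da H1 lexx !orbT.
  by rewrite /db H1 lexx !orbT.
have [H1 H2] := Hd p pl.
by split=> ne; rewrite ge_min; apply/orP; left; [apply: H1|apply: H2].
Qed.


Lemma local_struct H e f : 0 < e -> pw_affine_on H e f -> exists d pL pR,
  [/\ 0 < d, d <= e, piece_slope_in H pL /\ piece_slope_in H pR,
   (forall x, `|x - 1| < d -> x <= 1 -> f x = piece_val pL x) &
   (forall x, `|x - 1| < d -> 1 <= x -> f x = piece_val pR x)].
Proof.
move=> e0 [l [Hl Hcov]].
have [d [d0 de Hd]] := endpoints_bound l e0.
have x0b : `|(1 - d / 2) - 1| < d.
  have -> : 1 - d / 2 - 1 = - (d / 2) by ring.
  by rewrite normrN ger0_norm ?divr_ge0 ?ltW // ltr_pdivrMr //; lra.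
have x1b : `|(1 + d / 2) - 1| < d.
  have -> : 1 + d / 2 - 1 = d / 2 by ring.
  by rewrite ger0_norm ?divr_ge0 ?ltW // ltr_pdivrMr //; lra.
have [p pl /andP[pa pb]] := Hcov _ (lt_le_trans x0b de).
have [q ql /andP[qa qb]] := Hcov _ (lt_le_trans x1b de).
have [Hp1 Hp2] := Hl p pl; have [Hq1 Hq2] := Hl q ql.
have [Da Db] := Hd p pl; have [Ea Eb] := Hd q ql.
have d2 : 0 < d / 2 by rewrite divr_gt0.
have d2' : d / 2 < d by rewrite ltr_pdivrMr //; lra.
exists d, p.2, q.2; split => //.
- move=> x xd x1; apply: Hp2; first exact: lt_le_trans xd de.
  move: xd; rewrite ltr_norml => /andP[xl xr].
  have a1 : p.1.1 != 1 by apply/eqP => E; move: pa; rewrite E; lra.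
  move: (Da a1); rewrite ler0_norm; last by lra.
  move=> ha; apply/andP; split; first by lra.
  case: (lerP 1 p.1.2) => b1; first by lra.
  have b1' : p.1.2 != 1 by apply/eqP => E; move: b1; rewrite E; lra.
  move: (Db b1'); rewrite ler0_norm; last by lra.
  by lra.
- move=> x xd x1; apply: Hq2; first exact: lt_le_trans xd de.
  move: xd; rewrite ltr_norml => /andP[xl xr].
  have b1 : q.1.2 != 1 by apply/eqP => E; move: qb; rewrite E; lra.
  move: (Eb b1); rewrite ger0_norm; last by lra.
  move=> hb; apply/andP; split; last by lra.
  case: (lerP q.1.1 1) => a1; first by lra.
  have a1' : q.1.1 != 1 by apply/eqP => E; move: a1; rewrite E; lra.
  move: (Ea a1'); rewrite ger0_norm; last by lra.
  by lra.
Qed.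


Local Open Scope ereal_scope.

Lemma arith1 (a b : \bar R) (r r' : R) :
  (a - r%:E = b - r'%:E) <-> (a + r'%:E = b + r%:E).
Proof.
case: a => [a||]; case: b => [b||] //=; split => // -[] E; congr EFin; lra.
Qed.

Lemma arith4 (a b : \bar R) (r : R) : a + r%:E = b + r%:E -> a = b.
Proof. case: a => [a||]; case: b => [b||] //= -[] E; congr EFin; lra. Qed.

Lemma arith3 (a b : \bar R) (r r' : R) :
  (a + b) - (r%:E + r'%:E) = (a - r%:E) + (b - r'%:E).
Proof. case: a => [a||]; case: b => [b||] //=; congr EFin; ring. Qed.

Lemma arith2 (a b : \bar R) (r r' : R) :
  Order.max (a + r'%:E) (b + r%:E) - (r%:E + r'%:E) =
  Order.max (a - r%:E) (b - r'%:E).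
Proof.
case: a => [a||]; case: b => [b||] //=;
  rewrite ?addNye ?addeNy ?addye ?maxey ?maxye ?maxNye ?maxeNy //.
all: rewrite -?EFinD -?EFin_max -?EFinD //.
- by rewrite addr_maxl; congr (Num.max _ _)%:E; ring.
- by congr EFin; ring.
- by congr EFin; ring.
Qed.
End Helpers.

Section H2.
Local Open Scope ring_scope.
Local Open Scope classical_set_scope.
Variable R : realType.
Implicit Types (H : set R) (f g h : R -> \bar R).

Lemma fin_struct H e f : 0 < e -> pw_affine_on H e f -> ~ germ_eq f (@gzero R) ->
 exists d cL sL cR sR, [/\ 0 < d, d <= e, H sL /\ H sR,
   (forall x, `|x - 1| < d -> x <= 1 -> f x = (cL + sL * x)%:E) &
   (forall x, `|x - 1| < d -> 1 <= x -> f x = (cR + sR * x)%:E)].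
Proof.
move=> e0 pw nz; have [d [pL [pR [d0 de [sL sR] HL HR]]]] := local_struct e0 pw.
have b1 : `|1 - 1 : R| < d by rewrite subrr normr0.
have E : piece_val pL 1 = piece_val pR 1 by rewrite -HL // -HR.
case: pL sL HL E => [[cL sl]|] sL HL; case: pR sR HR => [[cR sr]|] sR HR //= E.
- by exists d, cL, sl, cR, sr.
- exfalso; apply: nz; exists d; split => // x xd; rewrite /gzero.
  by case: (lerP x 1) => x1; [rewrite HL|rewrite HR] => //; apply: ltW.
Qed.

Lemma fin_near H e f : 0 < e -> pw_affine_on H e f -> ~ germ_eq f (@gzero R) ->
  exists d, [/\ 0 < d, d <= e & forall x, `|x - 1| < d -> exists r, f x = r%:E].
Proof.
move=> e0 pw nz; have [d [cL [sL [cR [sR [d0 de _ HL HR]]]]]] := fin_struct e0 pw nz.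
exists d; split => // x xd; case: (lerP x 1) => x1.
  by eexists; rewrite HL.
by eexists; rewrite HR // ltW.
Qed.


Lemma cont_EFin (F : R -> R) x : {for x, continuous F} ->
  {for x, continuous (fun y => (F y)%:E)}.
Proof. by move=> cF; apply: cvg_EFin; [exact: nearW | exact: cF]. Qed.

Lemma CPL_max H a s b t : H s -> H t -> s <= t -> a + s = b + t ->
  CPL_germ H (fun x => (Num.max (a + s * x) (b + t * x))%:E).
Proof.
move=> Hs Ht st ab; exists 1; split => //; split; [|split].
- exists [:: ((0, 1), Some (a, s)); ((1, 2), Some (b, t))]; split.
    move=> p; rewrite !in_cons in_nil orbF => /orP[] /eqP -> /=; split => // x _ /andP[x0 x1].
      congr EFin; apply: max_l; rewrite -subr_ge0.
      have -> : a + s * x - (b + t * x) = (t - s) * (1 - x).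
        by rewrite (_ : a = b + t - s); [ring | lra].
      by apply: mulr_ge0; lra.
    congr EFin; apply: max_r; rewrite -subr_ge0.
    have -> : b + t * x - (a + s * x) = (t - s) * (x - 1).
      by rewrite (_ : a = b + t - s); [ring | lra].
    by apply: mulr_ge0; lra.
  move=> x; rewrite ltr_norml => /andP[xl xr]; case: (lerP x 1) => x1.
    exists ((0, 1), Some (a, s)); rewrite ?mem_head //=.
    by apply/andP; split; lra.
  exists ((1, 2), Some (b, t)); first by rewrite !in_cons eqxx orbT.
  by rewrite /=; apply/andP; split; lra.
- move=> x _; apply: cont_EFin.
  have ca : forall c r : R, {for x, continuous (fun y : R => c + r * y)}.
    move=> c r; apply: cvgD; [exact: cvg_cst | apply: cvgM; [exact: cvg_cst | exact: cvg_id]].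
  exact: (continuous_max (ca a s) (ca b t)).
- move=> x y u _ _ /andP[u0 u1].
  rewrite -!EFinM -EFinD lee_fin ge_max.
  have hx : a + s * x <= Num.max (a + s * x) (b + t * x) /\ b + t * x <= Num.max (a + s * x) (b + t * x).
    by rewrite !le_max !lexx orbT.
  have hy : a + s * y <= Num.max (a + s * y) (b + t * y) /\ b + t * y <= Num.max (a + s * y) (b + t * y).
    by rewrite !le_max !lexx orbT.
  case: hx hy => hAx hBx [hAy hBy].
  apply/andP; split.
  - rewrite (_ : a + s * (u * x + (1 - u) * y) = u * (a + s * x) + (1 - u) * (a + s * y)); last by ring.
    by apply: lerD; apply: ler_wpM2l => //; lra.
  - rewrite (_ : b + t * (u * x + (1 - u) * y) = u * (b + t * x) + (1 - u) * (b + t * y)); last by ring.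
    by apply: lerD; apply: ler_wpM2l => //; lra.
Qed.


Lemma CPL_zero H : CPL_germ H (@gzero R).
Proof.
exists 1; split => //; split; [|split].
- exists [:: ((0, 2), None)]; split.
    by move=> p; rewrite in_cons in_nil orbF => /eqP -> /=.
  move=> x; rewrite ltr_norml => /andP[xl xr].
  by exists ((0, 2), None); rewrite ?mem_head //= ; apply/andP; split; lra.
- by move=> x _; exact: cvg_cst.
- by move=> x y u _ _ _; rewrite /gzero leNye.
Qed.

Lemma PL_phi H f g : (forall x y, H x -> H y -> H (x - y)) ->
  frac_pair H f g -> PL_germ H (fun x => (f x - g x)%E).
Proof.
move=> Hsub [[ef [ef0 [pwf [cf _]]]] [[eg [eg0 [pwg [cg _]]]] nz]].
have [df [pL [pR [df0 dfe [sL sR] HL HR]]]] := local_struct ef0 pwf.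
have [dg [cL [tL [cR [tR [dg0 dge [tLH tRH] GL GR]]]]]] := fin_struct eg0 pwg nz.
pose dp (o : option (R * R)) c t := if o is Some (c0, s0) then Some (c0 - c, s0 - t) else None.
pose d := Num.min df dg.
have d0 : 0 < d by rewrite lt_min df0 dg0.
have dd : forall x, `|x - 1| < d -> `|x - 1| < df /\ `|x - 1| < dg.
  by move=> x; rewrite lt_min => /andP[].
exists d; split => //; split.
- exists [:: ((1 - d, 1), dp pL cL tL); ((1, 1 + d), dp pR cR tR)]; split.
  + move=> p; rewrite !in_cons in_nil orbF => /orP[] /eqP -> /=.
    * split; first by case: (pL) sL => [[c0 s0]|] //= ?; exact: Hsub.
      move=> x /dd [xf xg] /andP[_ x1].
      by rewrite HL // GL //; case: (pL) => [[c0 s0]|] //=; congr EFin; ring.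
    * split; first by case: (pR) sR => [[c0 s0]|] //= ?; exact: Hsub.
      move=> x /dd [xf xg] /andP[x1 _].
      by rewrite HR // GR //; case: (pR) => [[c0 s0]|] //=; congr EFin; ring.
  + move=> x; rewrite ltr_norml => /andP[xl xr]; case: (lerP x 1) => x1.
      by exists ((1 - d, 1), dp pL cL tL); rewrite ?mem_head //=; apply/andP; split; lra.
    exists ((1, 1 + d), dp pR cR tR); first by rewrite !in_cons eqxx orbT.
    by rewrite /=; apply/andP; split; lra.
- move=> x /dd [xf xg].
  have [r gx] : exists r, g x = r%:E.
    by case: (lerP x 1) => x1; [rewrite GL | rewrite GR ?ltW] => //; eexists.
  apply: cvgeB; [ | exact: cf (lt_le_trans xf dfe) | exact: cg (lt_le_trans xg dge)].
  by rewrite gx; case: (f x).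
Qed.


Lemma maxL (a s b t x : R) : a + s = b + t -> s <= t -> x <= 1 ->
  Num.max (a + s * x) (b + t * x) = a + s * x.
Proof.
move=> ab st x1; apply: max_l; rewrite -subr_ge0.
have -> : a + s * x - (b + t * x) = (t - s) * (1 - x).
  by rewrite (_ : a = b + t - s); [ring | lra].
by apply: mulr_ge0; lra.
Qed.

Lemma maxR (a s b t x : R) : a + s = b + t -> s <= t -> 1 <= x ->
  Num.max (a + s * x) (b + t * x) = b + t * x.
Proof.
move=> ab st x1; apply: max_r; rewrite -subr_ge0.
have -> : b + t * x - (a + s * x) = (t - s) * (x - 1).
  by rewrite (_ : a = b + t - s); [ring | lra].
by apply: mulr_ge0; lra.
Qed.

Lemma surj H h : H 0 -> (forall x y, H x -> H y -> H (x - y)) -> PL_germ H h ->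
  exists f g, frac_pair H f g /\ germ_eq (fun x => (f x - g x)%E) h.
Proof.
move=> H0 Hsub [e [e0 [pw _]]].
have [d [pL [pR [d0 de [sL sR] HL HR]]]] := local_struct e0 pw.
have b1 : `|1 - 1 : R| < d by rewrite subrr normr0.
have E : piece_val pL 1 = piece_val pR 1 by rewrite -HL // -HR.
have HC : CPL_germ H (fun x => (Num.max (0 + 0 * x) (0 + 0 * x))%:E).
  by apply: CPL_max => //; lra.
have nzC : ~ germ_eq (fun x : R => (Num.max (0 + 0 * x) (0 + 0 * x))%:E) (@gzero R).
  by move=> [e' [e0' He']]; have := He' 1; rewrite subrr normr0 => /(_ e0').
case: pL sL HL E => [[cL s1]|] sL HL; case: pR sR HR => [[cR s2]|] sR HR //= E.
- move: E => [] E; rewrite !mulr1 in E.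
  case: (lerP s1 s2) => ss.
  + exists (fun x => (Num.max (cL + s1 * x) (cR + s2 * x))%:E),
      (fun x => (Num.max (0 + 0 * x) (0 + 0 * x))%:E).
    split; first by split; [apply: CPL_max | split].
    exists d; split => // x xd; rewrite maxxx mul0r addr0 /=.
    case: (lerP x 1) => x1.
      by rewrite HL // maxL // /= -EFinD; congr EFin; ring.
    have x1' := ltW x1.
    by rewrite HR // maxR // /= -EFinD; congr EFin; ring.
  + have s12 : H (s1 + s2).
      by have := Hsub _ _ sL (Hsub _ _ H0 sR); rewrite sub0r opprK.
    exists (fun x => (Num.max ((cL + cR) + (s1 + s2) * x) ((cL + cR) + (s1 + s2) * x))%:E),
      (fun x => (Num.max (cR + s2 * x) (cL + s1 * x))%:E).
    split.
      split; first by apply: CPL_max.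
      split; first by apply: CPL_max => //; first exact: ltW; lra.
      move=> [e' [e0' He']]; have := He' 1; rewrite subrr normr0 => /(_ e0') //.
    exists d; split => // x xd; rewrite maxxx /=.
    case: (lerP x 1) => x1.
      by rewrite HL // maxL //; first (rewrite /= -EFinD; congr EFin; ring); try lra; exact: ltW.
    have x1' := ltW x1.
    by rewrite HR // maxR //; first (rewrite /= -EFinD; congr EFin; ring); try lra; exact: ltW.
- exists (@gzero R), (fun x => (Num.max (0 + 0 * x) (0 + 0 * x))%:E).
  split; first by split; [exact: CPL_zero | split].
  exists d; split => // x xd; rewrite /gzero /=.
  by case: (lerP x 1) => x1; [rewrite HL | rewrite HR ?ltW].
Qed.

End H2.

Lemma frac_fin (R : realType) (H : set R) f g : frac_pair H f g ->
  exists d : R, (0 < d)%R /\ forall x, (`|x - 1| < d)%R -> exists r, g x = r%:E.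
Proof.
move=> [_ [[eg [eg0 [pwg _]]] nz]].
by have [d [d0 _ Hd]] := fin_near eg0 pwg nz; exists d.
Qed.

Theorem proposition4p5 (R : realType) (H : set R) :
  rank_one_subgroup H ->
  (* R_H is multiplicatively cancellative *)
  (forall f g h : R -> \bar R, CPL_germ H f -> CPL_germ H g -> CPL_germ H h ->
     ~ germ_eq h (@gzero R) -> germ_eq (gadd f h) (gadd g h) -> germ_eq f g)
  /\
  (* Frac R_H (pairs (f,g), g <> 0, modulo f+g' = f'+g) is isomorphic to the
     semifield of germs of piecewise affine continuous functions with slopes in H *)
  (exists Phi : (R -> \bar R) -> (R -> \bar R) -> (R -> \bar R),
     (forall f g, frac_pair H f g -> PL_germ H (Phi f g)) /\
     (forall f g f' g', frac_pair H f g -> frac_pair H f' g' ->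
        (germ_eq (Phi f g) (Phi f' g') <-> germ_eq (gadd f g') (gadd f' g))) /\
     (forall h, PL_germ H h -> exists f g, frac_pair H f g /\ germ_eq (Phi f g) h) /\
     (forall f g f' g', frac_pair H f g -> frac_pair H f' g' ->
        germ_eq (Phi (gmax (gadd f g') (gadd f' g)) (gadd g g'))
                (gmax (Phi f g) (Phi f' g'))) /\
     (forall f g f' g', frac_pair H f g -> frac_pair H f' g' ->
        germ_eq (Phi (gadd f f') (gadd g g')) (gadd (Phi f g) (Phi f' g')))).
Proof.
move=> [H0 Hsub _ _].
have two : forall f g f' g', frac_pair H f g -> frac_pair H f' g' ->
    exists d : R, (0 < d)%R /\ forall x, (`|x - 1| < d)%R ->
      exists r r', g x = r%:E /\ g' x = r'%:E.
  move=> f g f' g' /frac_fin [d1 [d10 H1]] /frac_fin [d2 [d20 H2]].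
  exists (Num.min d1 d2); split; first by rewrite lt_min d10 d20.
  move=> x; rewrite lt_min => /andP[x1 x2].
  by have [r ->] := H1 x x1; have [r' ->] := H2 x x2; exists r, r'.
split.
  move=> f g h _ _ [eh [eh0 [pwh _]]] nz [e [e0 He]].
  have [d [d0 _ Hd]] := fin_near eh0 pwh nz.
  exists (Num.min e d); split; first by rewrite lt_min e0 d0.
  move=> x; rewrite lt_min => /andP[xe xd].
  have [r hr] := Hd x xd; have := He x xe; rewrite /gadd hr; exact: arith4.
exists (fun f g x => (f x - g x)%E); split; first by move=> f g; exact: PL_phi.
split.
  move=> f g f' g' fg fg'; have [d [d0 Hd]] := two _ _ _ _ fg fg'.
  split => -[e [e0 He]]; exists (Num.min e d); (split; first by rewrite lt_min e0 d0);
    move=> x; rewrite lt_min => /andP[xe xd]; have [r [r' [gx g'x]]] := Hd x xd;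
    have := He x xe; rewrite /gadd gx g'x;
    [exact: (arith1 _ _ _ _).1 | exact: (arith1 _ _ _ _).2].
split; first by move=> h; exact: surj.
split.
  move=> f g f' g' fg fg'; have [d [d0 Hd]] := two _ _ _ _ fg fg'.
  exists d; split => // x xd; have [r [r' [gx g'x]]] := Hd x xd.
  by rewrite /gmax /gadd gx g'x arith2.
move=> f g f' g' fg fg'; have [d [d0 Hd]] := two _ _ _ _ fg fg'.
exists d; split => // x xd; have [r [r' [gx g'x]]] := Hd x xd.
by rewrite /gadd gx g'x arith3.
Qed.
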